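(* Let $C$ be a single-qubit Pauli-Square-Root Clifford of order $2$ (i.e. $C^2=I$) and let $|\psi\rangle$ be a $+1$ eigenstate of $C$. Define the twirling map $\mathcal{T}_C(\rho)=\frac12\big(\rho+C\rho C^{\dagger}\big)$. Then for any single-qubit quantum channel $\mathcal{E}$, $$\mathcal{T}_C\circ\mathcal{E}(|\psi\rangle\langle\psi|)=(1-p)|\psi\rangle\langle\psi|+p\,P|\psi\rangle\langle\psi|P^{\dagger}$$ for some Pauli $P$ and some $0\le p\le 1$.
   Context: Paulis are tensor products of $I,X,Y,Z$ times a phase in $\{\pm1,\pm i\}$; a Clifford maps Paulis to Paulis under conjugation. A Pauli-Square-Root Clifford (PSC) is a Clifford that is not a Pauli and whose square is a Pauli. *)

(* Defs.v *)
From HB Require Import structures.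
From mathcomp Require Import all_boot all_order all_algebra.
Set Implicit Arguments. Unset Strict Implicit. Unset Printing Implicit Defensive.
Import Order.TTheory GRing.Theory Num.Theory.
Local Open Scope ring_scope.

Section Qubit.
Variable F : numClosedFieldType.

Definition adj m n (A : 'M[F]_(m, n)) : 'M[F]_(n, m) := (map_mx Num.conj A)^T.

Inductive pauli_letter := PI | PX | PY | PZ.

Definition pauli_base (l : pauli_letter) : 'M[F]_2 :=
  match l with
  | PI => 1%:M
  | PX => \matrix_(i, j) (if (i : nat) == j then 0 else 1)
  | PY => \matrix_(i, j) (if (i : nat) == j then 0
                           else if (i : nat) == 0%N then - 'i else 'i)
  | PZ => \matrix_(i, j) (if (i : nat) == j then
                           (if (i : nat) == 0%N then 1 else -1) else 0)
  end.

Definition is_pauli (P : 'M[F]_2) : Prop :=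
  exists (ph : F) (l : pauli_letter),
    ph \in [:: 1; -1; 'i; - 'i] /\ P = ph *: pauli_base l.

Definition is_unitary (U : 'M[F]_2) : Prop := U *m adj U = 1%:M.

Definition is_clifford (U : 'M[F]_2) : Prop :=
  is_unitary U /\ forall P, is_pauli P -> is_pauli (U *m P *m adj U).

Definition is_PSC (U : 'M[F]_2) : Prop :=
  is_clifford U /\ ~ is_pauli U /\ is_pauli (U *m U).

Definition is_channel (E : 'M[F]_2 -> 'M[F]_2) : Prop :=
  exists Ks : seq 'M[F]_2,
    \sum_(K <- Ks) (adj K *m K) = 1%:M /\
    forall rho, E rho = \sum_(K <- Ks) (K *m rho *m adj K).

Definition twirl (U rho : 'M[F]_2) : 'M[F]_2 :=
  2^-1 *: (rho + U *m rho *m adj U).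

End Qubit.

(* Main.v *)
Require Import Defs.
From mathcomp Require Import all_boot all_order all_algebra.
From mathcomp Require Import ring.
Import Order.TTheory GRing.Theory Num.Theory.
Local Open Scope ring_scope.

Lemma ord2_cases (i : 'I_2) : i = 0 \/ i = 1.
Proof. by case: i => [[|[|i]] Hi]; [left; apply: val_inj|right; apply: val_inj|]. Qed.

Section H.
Variable F : numClosedFieldType.

Lemma adjE m n (A : 'M[F]_(m, n)) i j : adj A i j = (A j i)^*.
Proof. by rewrite /adj !mxE. Qed.

Lemma mul2E m p (A : 'M[F]_(m, 2)) (B : 'M[F]_(2, p)) i j :
  (A *m B) i j = A i 0 * B 0 j + A i 1 * B 1 j.
Proof. rewrite !mxE !big_ord_recl big_ord0 addr0.
have -> : lift ord0 ord0 = 1 :> 'I_2 by exact: val_inj.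
by []. Qed.

Lemma mul1E m p (A : 'M[F]_(m, 1)) (B : 'M[F]_(1, p)) i j :
  (A *m B) i j = A i 0 * B 0 j.
Proof. by rewrite !mxE big_ord1. Qed.

Lemma addE m n (A B : 'M[F]_(m, n)) i j : (A + B) i j = A i j + B i j.
Proof. by rewrite mxE. Qed.
Lemma oppE m n (A : 'M[F]_(m, n)) i j : (- A) i j = - A i j.
Proof. by rewrite mxE. Qed.
Lemma scaleE m n k (A : 'M[F]_(m, n)) i j : (k *: A) i j = k * A i j.
Proof. by rewrite mxE. Qed.

Lemma mx2P (A B : 'M[F]_2) : A 0 0 = B 0 0 -> A 0 1 = B 0 1 -> A 1 0 = B 1 0 ->
  A 1 1 = B 1 1 -> A = B.
Proof.
move=> h00 h01 h10 h11; apply/matrixP => i j.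
by case: (ord2_cases i) => ->; case: (ord2_cases j) => ->.
Qed.

Lemma adj_mul m n p (A : 'M[F]_(m, n)) (B : 'M[F]_(n, p)) :
  adj (A *m B) = adj B *m adj A.
Proof. by rewrite /adj map_mxM trmx_mul. Qed.

Lemma adjK m n (A : 'M[F]_(m, n)) : adj (adj A) = A.
Proof. by apply/matrixP => i j; rewrite !adjE conjCK. Qed.

Lemma ring_mod (x y k l r : F) : l = r -> x = y + k * (l - r) -> x = y.
Proof. by move=> -> ->; rewrite subrr mulr0 addr0. Qed.


Lemma cM (x y : F) : (x * y)^* = x^* * y^*. Proof. exact: rmorphM. Qed.
Lemma cD (x y : F) : (x + y)^* = x^* + y^*. Proof. exact: rmorphD. Qed.
Lemma cB (x y : F) : (x - y)^* = x^* - y^*. Proof. exact: rmorphB. Qed.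
Lemma cN (x : F) : (- x)^* = - x^*. Proof. exact: rmorphN. Qed.
Lemma c1 : (1 : F)^* = 1. Proof. exact: rmorph1. Qed.
Lemma c0 : (0 : F)^* = 0. Proof. exact: rmorph0. Qed.
Lemma cn n : (n%:R : F)^* = n%:R. Proof. exact: rmorph_nat. Qed.

Lemma two_cancel (x : F) : 2%:R * x = 0 -> x = 0.
Proof. by move/eqP; rewrite mulf_eq0 pnatr_eq0 /= => /eqP. Qed.

Lemma tr11 (M : 'M[F]_1) : \tr M = M 0 0.
Proof. by rewrite /mxtrace big_ord1. Qed.

Lemma quad_tr (u : 'cV[F]_2) (M : 'M[F]_2) :
  (adj u *m M *m u) 0 0 = \tr (M *m (u *m adj u)).
Proof. by rewrite -tr11 -mulmxA mxtrace_mulC mulmxA. Qed.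

Lemma quad_sq (u v : 'cV[F]_2) (K : 'M[F]_2) :
  (adj u *m (K *m (v *m adj v) *m adj K) *m u) 0 0 =
  (adj u *m K *m v) 0 0 * ((adj u *m K *m v) 0 0)^*.
Proof.
have -> : adj u *m (K *m (v *m adj v) *m adj K) *m u =
   (adj u *m K *m v) *m adj (adj u *m K *m v).
  by rewrite !adj_mul adjK !mulmxA.
by rewrite mul1E adjE.
Qed.

Lemma sandwich (u : 'cV[F]_2) (M : 'M[F]_2) :
  u *m adj u *m M *m (u *m adj u) = (adj u *m M *m u) 0 0 *: (u *m adj u).
Proof.
have -> : u *m adj u *m M *m (u *m adj u) = u *m (adj u *m M *m u) *m adj u.
  by rewrite !mulmxA.
by rewrite {1}[adj u *m M *m u]mx11_scalar mul_mx_scalar -scalemxAl.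
Qed.

End H.
Arguments ring_mod {_ _ _} _ {_ _}.

Lemma twirl_id (V : pzRingType) (Pi Q R : V) : Pi + Q = 1 ->
  R + (Pi - Q) * R * (Pi - Q) = (Pi * R * Pi + Q * R * Q) *+ 2.
Proof.
move=> H.
transitivity ((Pi + Q) * R * (Pi + Q) + (Pi - Q) * R * (Pi - Q)).
  by rewrite H mul1r mulr1.
rewrite !(mulrDl, mulrDr, mulrBl, mulrBr) !mulNr.
set A := Pi * R * Pi; set B := Pi * R * Q; set C := Q * R * Pi; set D := Q * R * Q.
rewrite mulr2n opprB [D - B]addrC addrACA [A + C + _]addrACA subrr addr0.
by rewrite [B + D + _]addrACA subrr add0r [RHS]addrACA.
Qed.

Ltac ent := rewrite ?(addE, oppE, scaleE, mul2E, mul1E, adjE).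

Ltac csimp := rewrite ?(cM, cB, cD, cN, c1, c0, cn, conjCK, conjCi).

Lemma pauli_ph_neq0 (F : numClosedFieldType) (ph : F) :
  ph \in [:: 1; -1; 'i; - 'i] -> ph != 0.
Proof.
by rewrite !inE => /or4P [] /eqP ->; rewrite ?oppr_eq0 ?oner_eq0 ?neq0Ci.
Qed.

Theorem proposition4 (F : numClosedFieldType) (C : 'M[F]_2) (psi : 'cV[F]_2)
    (E : 'M[F]_2 -> 'M[F]_2) :
  is_PSC C -> C *m C = 1%:M ->
  adj psi *m psi = 1%:M -> C *m psi = psi ->
  is_channel E ->
  exists (P : 'M[F]_2) (p : F),
    is_pauli P /\ 0 <= p <= 1 /\
    twirl C (E (psi *m adj psi)) =
      (1 - p) *: (psi *m adj psi) + p *: (P *m (psi *m adj psi) *m adj P).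
Proof.
move=> [[Cu Ccl] [CnP _]] CC Npsi Cpsi [Ks [Ksum HE]].
set a : F := psi 0 0; set b : F := psi 1 0.
have Nab : a^* * a + b^* * b = 1.
  by have := congr1 (fun M : 'M[F]_1 => M 0 0) Npsi; rewrite mul2E !adjE mxE.
have Ch : adj C = C by rewrite -[adj C]mul1mx -CC -mulmxA Cu mulmx1.
have Cr i j : (C i j)^* = C j i by rewrite -adjE Ch.
have CCe i j := congr1 (fun M : 'M[F]_2 => M i j) CC.
have e00 := CCe 0 0; have e01 := CCe 0 1; have e11 := CCe 1 1.
rewrite /= mul2E mxE /= mulr1n in e00; rewrite /= mul2E mxE /= mulr0n in e01;
rewrite /= mul2E mxE /= mulr1n in e11.
have h11 : C 1 1 = - C 0 0.
  have : C 0 1 * (C 0 0 + C 1 1) = 0 by rewrite -e01; ring.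
  move/eqP; rewrite mulf_eq0 => /orP [/eqP h01 | ]; last first.
    by rewrite addr_eq0 => /eqP ->; rewrite opprK.
  have h10 : C 1 0 = 0 by rewrite -Cr h01 rmorph0.
  rewrite h01 h10 mul0r addr0 in e00; rewrite h01 h10 mul0r add0r in e11.
  have : (C 0 0 - C 1 1) * (C 0 0 + C 1 1) = 0.
    by apply: (ring_mod 1 e00); apply: (ring_mod (-1) e11); ring.
  move/eqP; rewrite mulf_eq0 => /orP [|]; last by rewrite addr_eq0 => /eqP ->; rewrite opprK.
  rewrite subr_eq0 => /eqP hd; exfalso; apply: CnP.
  exists (C 0 0), PI; split.
    have : C 0 0 ^+ 2 == 1 by rewrite expr2 e00.
    by rewrite sqrf_eq1 => /orP [] /eqP ->; rewrite !inE eqxx ?orbT.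
  by apply: mx2P; rewrite /= scaleE mxE /= ?mulr1 ?mulr0 // -hd.
set z : F := C 0 0; set w : F := C 0 1.
have h10 : C 1 0 = w^* by rewrite Cr.
have zr : z^* = z by rewrite Cr.
have ps0 := congr1 (fun M : 'cV[F]_2 => M 0 0) Cpsi; have ps1 := congr1 (fun M : 'cV[F]_2 => M 1 0) Cpsi.
rewrite /= mul2E -/a -/b -/z -/w in ps0; rewrite /= mul2E -/a -/b h10 h11 -/z in ps1.
have E1 : (1 - z) * a = w * b by apply: (ring_mod (-1) ps0); ring.
have E2 : (1 + z) * b = w^* * a by apply: (ring_mod (-1) ps1); ring.
have E1c : (1 - z) * a^* = w^* * b^*.
  by have := congr1 (fun x : F => x^*) E1; csimp; rewrite zr.
have E2c : (1 + z) * b^* = w * a^* by have := congr1 (fun x : F => x^*) E2; csimp; rewrite zr.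
have K1 : (1 - z) * (a * a^*) = (1 + z) * (b * b^*).
  transitivity (a * ((1 - z) * a^*)); first by ring.
  rewrite E1c; transitivity (b^* * ((1 + z) * b)); last by ring.
  by rewrite E2; ring.
have zab : z = a * a^* - b * b^*.
  apply: (ring_mod (-1) K1); apply: (ring_mod (- z) Nab); ring.
have wab : w = 2%:R * a * b^*.
  apply: (ring_mod (- a) E2c); apply: (ring_mod (- b^*) E1).
  apply: (ring_mod (- w) Nab); ring.
have C00 : C 0 0 = a * a^* - b * b^* by exact: zab.
have C01 : C 0 1 = 2%:R * a * b^* by exact: wab.
have C10 : C 1 0 = 2%:R * a^* * b by rewrite h10 wab; csimp; ring.
have C11 : C 1 1 = b * b^* - a * a^* by rewrite h11 C00; ring.
pose phi : 'cV[F]_2 := \col_(i < 2) (if (i : nat) == 0%N then - b^* else a^*).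
have phi0 : phi 0 0 = - b^* by rewrite mxE.
have phi1 : phi 1 0 = a^* by rewrite mxE.
set Pi := psi *m adj psi.
set Q := phi *m adj phi.
have HC : C = Pi - Q.
  apply: mx2P; rewrite ?(addE, oppE, mul1E, adjE, phi0, phi1) -/a -/b ?C00 ?C01 ?C10 ?C11;
  csimp; ring.
have PiQ : Pi + Q = 1%:M.
  apply: mx2P; rewrite ?(addE, oppE, mul1E, adjE, phi0, phi1) -/a -/b !mxE /= ?mulr1n ?mulr0n;
  csimp; first [ring | by apply: (ring_mod 1 Nab); ring].
have key : forall P, is_pauli P -> P *m Pi *m adj P = Q ->
  exists (P : 'M_2) (p : F), is_pauli P /\ 0 <= p <= 1 /\
    twirl C (E Pi) = (1 - p) *: Pi + p *: (P *m Pi *m adj P).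
  move=> P HP HPQ.
  set R := E Pi.
  set x := (adj psi *m R *m psi) 0 0; set y := (adj phi *m R *m phi) 0 0.
  have HR : R = \sum_(K <- Ks) K *m Pi *m adj K := HE _.
  have qsum (u : 'cV[F]_2) : (adj u *m R *m u) 0 0 =
      \sum_(K <- Ks) (adj u *m K *m psi) 0 0 * ((adj u *m K *m psi) 0 0)^*.
    rewrite HR mulmx_sumr mulmx_suml summxE; apply: eq_bigr => K _; rewrite /Pi; exact: quad_sq.
  have x0 : 0 <= x by rewrite /x qsum; apply: sumr_ge0 => K _; exact: mul_conjC_ge0.
  have y0 : 0 <= y by rewrite /y qsum; apply: sumr_ge0 => K _; exact: mul_conjC_ge0.
  have xy : x + y = 1.
    rewrite /x /y !quad_tr -mxtraceD -mulmxDr PiQ mulmx1 HR raddf_sum.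
    rewrite (eq_bigr (fun K => \tr (adj K *m K *m Pi))); last first.
      by move=> K _; change (\tr (K *m Pi *m adj K) = \tr (adj K *m K *m Pi)); rewrite mxtrace_mulC mulmxA.
    rewrite -raddf_sum -mulmx_suml Ksum mul1mx; change (\tr (psi *m adj psi) = 1).
    by rewrite mxtrace_mulC Npsi mxtrace1.
  exists P, y; split=> //; split.
    by apply/andP; split=> //; rewrite -xy addrC lerDl.
  rewrite /twirl Ch HC HPQ.
  have -> : 1 - y = x by rewrite -xy addrK.
  rewrite !mulmxE twirl_id; last exact: PiQ.
  rewrite -!mulmxE /Pi /Q !sandwich -/Pi -/Q -/x -/y.
  by rewrite -scaler_nat scalerA mulVf ?scale1r // pnatr_eq0.
have hX : is_pauli (pauli_base F PX) by exists 1, PX; rewrite scale1r !inE eqxx.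
have [ph [l [Hph Hl]]] := Ccl _ hX.
rewrite Ch in Hl.
have phn0 := pauli_ph_neq0 _ _ Hph.
have Hl00 := congr1 (fun M : 'M[F]_2 => M 0 0) Hl.
have Hl01 := congr1 (fun M : 'M[F]_2 => M 0 1) Hl.
have Hl11 := congr1 (fun M : 'M[F]_2 => M 1 1) Hl.
rewrite /= !mul2E scaleE ?C00 ?C01 ?C10 ?C11 /pauli_base !mxE /= in Hl00.
rewrite /= !mul2E scaleE ?C00 ?C01 ?C10 ?C11 /pauli_base !mxE /= in Hl01.
rewrite /= !mul2E scaleE ?C00 ?C01 ?C10 ?C11 /pauli_base !mxE /= in Hl11.
have cases3 : a * a^* - b * b^* = 0 \/ a * b^* + a^* * b = 0 \/ a * b^* - a^* * b = 0.
  case: l Hl Hl00 Hl01 Hl11 => _; rewrite ?mxE /= ?mulr1n ?mulr0n => Hl00 Hl01 Hl11.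
  - exfalso; move: phn0; have : ph * 1 + ph * 1 = 0 by rewrite -{1}Hl00 -Hl11; ring.
    by rewrite mulr1 -mulr2n => /eqP; rewrite mulrn_eq0 /= => ->.
  - have : 2%:R * ((a * a^* - b * b^*) * (a * b^* + a^* * b)) = 0.
      by apply: (ring_mod 1 Hl00); ring.
    by move/two_cancel/eqP; rewrite mulf_eq0 => /orP [] /eqP h; [left|right; left].
  - have : 2%:R * ((a * a^* - b * b^*) * (a * b^* + a^* * b)) = 0.
      by apply: (ring_mod 1 Hl00); ring.
    by move/two_cancel/eqP; rewrite mulf_eq0 => /orP [] /eqP h; [left|right; left].
  - have : (2%:R * a * b^* - (a * a^* - b * b^*)) * (2%:R * a * b^* + (a * a^* - b * b^*)) = 0.
      by apply: (ring_mod 1 Hl01); ring.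
    move/eqP; rewrite mulf_eq0 => /orP [] /eqP h; have hc := congr1 (fun x : F => x^*) h;
      rewrite /= ?c0 in hc; csimp; right; right; apply: two_cancel.
    + by move: h hc; csimp => h hc; apply: (ring_mod 1 h); apply: (ring_mod (-1) hc); ring.
    + by move: h hc; csimp => h hc; apply: (ring_mod 1 h); apply: (ring_mod (-1) hc); ring.
pose Yp : 'M[F]_2 := \matrix_(i, j) (if (i : nat) == j then 0 else if (i : nat) == 0%N then 1 else -1).
have Ypauli : is_pauli Yp.
  exists 'i, PY; split; first by rewrite !inE eqxx !orbT.
  apply: mx2P; rewrite !mxE /= ?mulr0 ?mulrN -?expr2 ?sqrCi ?opprK //.
case: cases3 => [h|[h|h]].
- apply: (key (pauli_base F PZ)); first by exists 1, PZ; rewrite scale1r !inE eqxx.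
  apply: mx2P; rewrite /Pi /Q; ent; rewrite ?phi0 ?phi1 -/a -/b !mxE /=; csimp;
  first [ring | by apply: (ring_mod 1 h); ring | by apply: (ring_mod (-1) h); ring].
- apply: (key (pauli_base F PX)); first by exists 1, PX; rewrite scale1r !inE eqxx.
  apply: mx2P; rewrite /Pi /Q; ent; rewrite ?phi0 ?phi1 -/a -/b !mxE /=; csimp;
  first [ring | by apply: (ring_mod 1 h); ring | by apply: (ring_mod (-1) h); ring].
- apply: (key Yp Ypauli).
  apply: mx2P; rewrite /Pi /Q; ent; rewrite ?phi0 ?phi1 -/a -/b !mxE /=; csimp;
  first [ring | by apply: (ring_mod 1 h); ring | by apply: (ring_mod (-1) h); ring].
Qed.
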